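(* Consider a HyperLogLog sketch with $m$ registers after inserting $n$ distinct elements (model and convention in the context), and let $B=\log_2\frac{n}{m}$. Then for every $\Delta\in(0,B)$ and every $j\in[m]$: (i) $\Pr[M[j]<B-\Delta]<\exp(-2^\Delta)<2^{-\Delta}$, and (ii) $\Pr[M[j]>B+\Delta]<2^{-\Delta}$.
   Context: HyperLogLog model: each of $n$ distinct elements $y_i$ is assigned a register index $f(y_i)$ uniform in $[m]$ and a value $\rho_i$ with $\Pr[\rho_i=k]=2^{-k}$, $k=1,2,\dots$ (the position of the first one-bit of a uniformly random hash value), all independent; register $M[j]$ is the maximum of $\rho_i$ over elements with $f(y_i)=j$ (0 if none). Then $\Pr[M[j]\le k]=(1-\frac{1}{m2^k})^n$ for integers $k\ge0$. Convention for this statement: each register $M[j]$ is treated as a real-valued continuous random variable with distribution function $\Pr[M[j]\le t]=\Pr[M[j]<t]=(1-\frac{1}{m2^t})^n$ for real $t$, and $\Pr[M[j]>t]=1-(1-\frac{1}{m2^t})^n$. *)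

(* Defs.v *)
From Stdlib Require Import Reals.
Open Scope R_scope.

Definition pow2R (t : R) : R := Rpower 2 t.
Definition log2R (x : R) : R := ln x / ln 2.

(* Following the
   stated convention, register M[j] (j < m) is treated as a continuous real
   random variable with distribution function
     Pr[M[j] <= t] = Pr[M[j] < t] = (1 - 1/(m 2^t))^n,
     Pr[M[j] > t]  = 1 - (1 - 1/(m 2^t))^n.
   The distribution does not depend on j (registers are identically
   distributed); j is kept as an argument to mirror the statement. *)
Definition hll_cdf (m n : nat) (t : R) : R :=
  (1 - 1 / (INR m * pow2R t)) ^ n.

Definition Pr_reg_lt (m n : nat) (j : nat) (t : R) : R := hll_cdf m n t.
Definition Pr_reg_le (m n : nat) (j : nat) (t : R) : R := hll_cdf m n t.
Definition Pr_reg_gt (m n : nat) (j : nat) (t : R) : R := 1 - hll_cdf m n t.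

(* Main.v *)
Require Import Defs.
From Stdlib Require Import Reals Lra Lia.
Open Scope R_scope.

Lemma bern_weak (u : R) (n : nat) : 0 <= u <= 1 -> 1 - INR n * u <= (1 - u) ^ n.
Proof.
  intros Hu. induction n as [|n IH].
  - simpl. lra.
  - rewrite S_INR. simpl.
    assert (H: (1 - INR n * u) * (1 - u) <= (1 - u) * (1 - u) ^ n).
    { rewrite Rmult_comm. apply Rmult_le_compat_l; lra. }
    assert (0 <= INR n) by apply pos_INR. nra.
Qed.

Lemma bern_strict (u : R) (n : nat) : 0 < u <= 1 -> (2 <= n)%nat -> 1 - INR n * u < (1 - u) ^ n.
Proof.
  intros Hu Hn. destruct n as [|n]; [lia|].
  rewrite S_INR. simpl.
  assert (Hw := bern_weak u n ltac:(lra)).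
  assert (H: (1 - INR n * u) * (1 - u) <= (1 - u) * (1 - u) ^ n).
  { rewrite Rmult_comm. apply Rmult_le_compat_l; lra. }
  assert (1 <= INR n) by (apply (le_INR 1); lia). nra.
Qed.

Lemma pow_lt_compat (a b : R) (n : nat) : 0 <= a < b -> (1 <= n)%nat -> a ^ n < b ^ n.
Proof.
  intros Hab Hn. induction n as [|n IH]; [lia|].
  destruct n as [|n]. { simpl. lra. }
  simpl. simpl in IH. assert (IH' := IH ltac:(lia)).
  assert (0 <= a * a ^ n) by (apply Rmult_le_pos; [lra| apply pow_le; lra]).
  nra.
Qed.

Lemma exp_pow' (x : R) (n : nat) : exp x ^ n = exp (INR n * x).
Proof.
  induction n as [|n IH].
  - simpl. rewrite Rmult_0_l, exp_0. reflexivity.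
  - simpl pow. rewrite IH, S_INR, <- exp_plus. f_equal. ring.
Qed.

Theorem lemma3p3 (m n : nat) (j : nat) (Delta : R) :
  (0 < m)%nat -> (j < m)%nat ->
  let B := log2R (INR n / INR m) in
  0 < Delta -> Delta < B ->
  (Pr_reg_lt m n j (B - Delta) < exp (- pow2R Delta) /\
   exp (- pow2R Delta) < pow2R (- Delta)) /\
  Pr_reg_gt m n j (B + Delta) < pow2R (- Delta).
Proof.
  intros Hm Hj B HD HDB.
  assert (Hln2 : 0 < ln 2).
  { apply exp_lt_inv. rewrite exp_0, exp_ln; lra. }
  assert (HmR : 0 < INR m) by (apply lt_0_INR; lia).
  assert (Hq : 0 < INR n / INR m).
  { destruct (Rlt_dec 0 (INR n / INR m)) as [h|h]; auto.
    exfalso. unfold B, log2R, ln in HDB.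
    destruct (Rlt_dec 0 (INR n / INR m)); [contradiction|].
    unfold Rdiv in HDB. rewrite Rmult_0_l in HDB. lra. }
  set (e := pow2R Delta).
  assert (He : e = exp (Delta * ln 2)) by reflexivity.
  assert (He1 : 1 < e). { rewrite He, <- exp_0. apply exp_increasing. nra. }
  assert (HBl : B * ln 2 = ln (INR n / INR m)).
  { unfold B, log2R. field. lra. }
  assert (Heq : e < INR n / INR m).
  { rewrite He, <- (exp_ln (INR n / INR m)) by lra. apply exp_increasing.
    rewrite <- HBl. nra. }
  assert (Hnm : INR m * e < INR n).
  { apply (Rmult_lt_compat_l (INR m)) in Heq; auto. field_simplify in Heq; lra. }
  assert (Hn2 : (2 <= n)%nat).
  { assert (1 <= INR m) by (apply (le_INR 1); lia).
    assert (1 < INR n) by nra.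
    destruct n as [|[|n]]; simpl in *; try lra. lia. }
  assert (HnR : 2 <= INR n) by (apply (le_INR 2); lia).
  assert (Hminus : INR m * pow2R (B - Delta) = INR n / e).
  { unfold pow2R, Rpower. rewrite Rmult_minus_distr_r, HBl.
    unfold Rminus. rewrite exp_plus, exp_Ropp, exp_ln by lra.
    unfold e, pow2R, Rpower. assert (0 < exp (Delta * ln 2)) by apply exp_pos. field. lra. }
  assert (Hplus : INR m * pow2R (B + Delta) = INR n * e).
  { unfold pow2R, Rpower. rewrite Rmult_plus_distr_r, HBl.
    rewrite exp_plus, exp_ln by lra.
    unfold e, pow2R, Rpower. field. lra. }
  assert (Hinv : pow2R (- Delta) = / e) by (unfold pow2R; apply Rpower_Ropp).
  split; [split|].
  - unfold Pr_reg_lt, hll_cdf. rewrite Hminus.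
    set (x := e / INR n).
    assert (Hx : 1 / (INR n / e) = x) by (unfold x; field; lra).
    rewrite Hx.
    assert (Hx0 : 0 < x) by (unfold x; apply Rdiv_lt_0_compat; lra).
    assert (Hx1 : x < 1) by (unfold x; apply (Rmult_lt_reg_r (INR n)); [lra|]; unfold Rdiv; rewrite Rmult_assoc, Rinv_l; [|lra]; assert (1 <= INR m) by (apply (le_INR 1); lia); nra).
    assert (Hexp : exp (- e) = exp (- x) ^ n).
    { rewrite exp_pow'. f_equal. unfold x. field. lra. }
    rewrite Hexp. apply pow_lt_compat; [|lia].
    split; [lra|]. assert (h := exp_ineq1 (- x) ltac:(lra)). lra.
  - rewrite Hinv. fold e.
    assert (h := exp_ineq1 e ltac:(lra)).
    rewrite exp_Ropp. apply Rinv_lt_contravar.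
    + apply Rmult_lt_0_compat; [lra| apply exp_pos].
    + lra.
  - unfold Pr_reg_gt, hll_cdf. rewrite Hplus, Hinv.
    set (u := 1 / (INR n * e)).
    assert (Hu0 : 0 < u) by (unfold u; apply Rdiv_lt_0_compat; nra).
    assert (Hu1 : u <= 1) by (unfold u; apply (Rmult_le_reg_r (INR n * e)); [nra|]; unfold Rdiv; rewrite Rmult_assoc, Rinv_l; nra).
    assert (hb := bern_strict u n (conj Hu0 Hu1) Hn2).
    assert (Hnu : INR n * u = / e) by (unfold u; field; lra).
    lra.
Qed.
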